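(* Let $(K,v)$ be a valued field and let $\mathcal C=(\rho_i)_{i\in A}$ be a totally ordered family of inner nodes of $\mathcal T$ containing no maximal element, indexed by a totally ordered set $A$ so that $i\mapsto\rho_i$ is an order isomorphism. A nonzero $f\in K[x]$ is $\mathcal C$-stable if and only if $\operatorname{in}_{\rho_i}f$ is a unit in $\mathcal G_{\rho_i}$ for some $i\in A$.
   Context: $\Gamma$ is the value group of $v$, $\Gamma_{\mathbb Q}=\Gamma\otimes\mathbb Q$. $\mathcal T$ is the set of valuations $\mu$ on $K[x]$ with values in $\Gamma_{\mathbb Q}\cup\{\infty\}$, $\mu|_K=v$, $\mu^{-1}(\infty)=\{0\}$, partially ordered by $\mu\le\nu$ iff $\mu(f)\le\nu(f)$ for all $f\in K[x]$. For $\mu\in\mathcal T$ with value group $\Gamma_\mu$, the graded algebra is $\mathcal G_\mu=\bigoplus_{\alpha\in\Gamma_\mu}\mathcal P_\alpha/\mathcal P_\alpha^+$, where $\mathcal P_\alpha=\{g:\mu(g)\ge\alpha\}$, $\mathcal P^+_\alpha=\{g:\mu(g)>\alpha\}$, and $\operatorname{in}_\mu g=g+\mathcal P^+_{\mu(g)}$ for $g\ne0$. A polynomial $g$ is $\mu$-irreducible if $\operatorname{in}_\mu g$ generates a prime homogeneous principal ideal, and $\mu$-minimal if $\operatorname{in}_\mu g\nmid\operatorname{in}_\mu f$ for all nonzero $f$ with $\deg f<\deg g$; a key polynomial for $\mu$ is a monic $\mu$-minimal, $\mu$-irreducible polynomial. $\mu$ is an inner node if it has a key polynomial (equivalently, it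 is not maximal in $\mathcal T$). A polynomial $f$ is $\mathcal C$-stable if there is $i\in A$ with $\rho_i(f)=\rho_j(f)$ for all $j>i$. *)

(* Defs.v *)
From HB Require Import structures.
From mathcomp Require Import all_boot all_order all_algebra.
Set Implicit Arguments. Unset Strict Implicit. Unset Printing Implicit Defensive.
Import Order.TTheory GRing.Theory Num.Theory.
Local Open Scope ring_scope.

(* Values of valuations live in  D u {oo}, modelled as  option D        *)
(* with None = oo.                                                      *)

Definition ordered_qspace (D : lmodType rat) (le : rel D) : Prop :=
  [/\ reflexive le, transitive le, antisymmetric le,
      total le & forall x y z : D, le x y -> le (x + z) (y + z)].

Section ValDefs.
Variables (D : lmodType rat) (le : rel D).

Definition vle (a b : option D) : Prop :=
  match a, b with
  | _, None => True
  | None, Some _ => False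
  | Some x, Some y => le x y
  end.
Definition vlt (a b : option D) : Prop := vle a b /\ a <> b.

Definition vadd (a b : option D) : option D :=
  match a, b with
  | Some x, Some y => Some (x + y)
  | _, _ => None
  end.

Definition is_valuation (R : comNzRingType) (w : R -> option D) : Prop :=
  [/\ w 0 = None, w 1 = Some 0,
      forall x y, w (x * y) = vadd (w x) (w y)
    & forall x y, (* w (x + y) >= min (w x) (w y) *)
        (vle (w x) (w y) -> vle (w x) (w (x + y)))
        /\ (vle (w y) (w x) -> vle (w y) (w (x + y)))].

(* (K,v) is a valued field and D is Gamma_Q = Gamma (x) Q, where Gamma is
   the value group of v: D is a Q-vector space in which every element has
   a positive integer multiple lying in Gamma = v(K \ {0}); i.e. D is the
   divisible hull of Gamma. *)
Definition valued_field_with_GammaQ (K : fieldType) (v : K -> option D) : Prop :=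
  [/\ ordered_qspace le,
      is_valuation v,
      forall c, v c = None -> c = 0
    & forall d : D, exists n : nat, exists c : K,
        (0 < n)%N /\ c != 0 /\ v c = Some (d *+ n)].

Variable K : fieldType.

Definition in_T (v : K -> option D) (mu : {poly K} -> option D) : Prop :=
  [/\ is_valuation mu,
      forall c : K, mu c%:P = v c
    & forall f, mu f = None -> f = 0].

Definition T_le (mu nu : {poly K} -> option D) : Prop :=
  forall f, vle (mu f) (nu f).
Definition T_lt (mu nu : {poly K} -> option D) : Prop :=
  T_le mu nu /\ exists f, mu f <> nu f.

(* Graded algebra G_mu, via initial forms.
   in_mu a = in_mu b  (for a, b in K[x])  iff  a = b or mu(a - b) > mu(a),
   (a ~_mu b);  products: in_mu a * in_mu b = in_mu (a b). *)
Definition in_eq (mu : {poly K} -> option D) (a b : {poly K}) : Prop :=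
  a = b \/ vlt (mu a) (mu (a - b)).

(* in_mu g divides in_mu f in G_mu (homogeneous elements; quotients of
   homogeneous elements in the graded domain G_mu are homogeneous,
   hence of the form in_mu h) *)
Definition in_dvd (mu : {poly K} -> option D) (g f : {poly K}) : Prop :=
  exists h, in_eq mu f (g * h).

(* in_mu f is a unit of G_mu: in_mu f * in_mu h = 1 = in_mu 1 for some h *)
Definition in_unit (mu : {poly K} -> option D) (f : {poly K}) : Prop :=
  exists h, in_eq mu (f * h) 1.

(* g is mu-irreducible: in_mu g generates a prime homogeneous principal
   ideal (proper, and prime tested on nonzero homogeneous elements) *)
Definition mu_irreducible (mu : {poly K} -> option D) (g : {poly K}) : Prop :=
  [/\ g != 0, ~ in_unit mu g
    & forall a b, a != 0 -> b != 0 -> in_dvd mu g (a * b) ->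
        in_dvd mu g a \/ in_dvd mu g b].

Definition mu_minimal (mu : {poly K} -> option D) (g : {poly K}) : Prop :=
  forall f : {poly K}, f != 0 -> (size f < size g)%N -> ~ in_dvd mu g f.

Definition key_polynomial (mu : {poly K} -> option D) (g : {poly K}) : Prop :=
  [/\ g \is monic, mu_minimal mu g & mu_irreducible mu g].

Definition inner_node (mu : {poly K} -> option D) : Prop :=
  exists g, key_polynomial mu g.

Definition C_stable (d : Order.disp_t) (A : orderType d)
    (rho : A -> {poly K} -> option D) (f : {poly K}) : Prop :=
  exists i : A, forall j : A, (i < j)%O -> rho i f = rho j f.

End ValDefs.

(* Main.v *)
Require Import Defs.
From HB Require Import structures.
From mathcomp Require Import all_boot all_order all_algebra.
From mathcomp Require Import zify ring.
From Stdlib Require Import Classical.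
Import Order.TTheory GRing.Theory Num.Theory.
Local Open Scope ring_scope.
Set Implicit Arguments.

Section Q.
Variables (D : lmodType rat) (le : rel D).
Hypothesis Hq : ordered_qspace le.

Lemma qle_refl x : le x x.
Proof. by case: Hq => r _ _ _ _; apply: r. Qed.
Lemma qle_trans x y z : le x y -> le y z -> le x z.
Proof. by case: Hq => _ t _ _ _ a b; apply: t a b. Qed.
Lemma qle_anti x y : le x y -> le y x -> x = y.
Proof. by case: Hq => _ _ an _ _ a b; apply: an; rewrite a b. Qed.
Lemma qle_total x y : le x y || le y x.
Proof. by case: Hq => _ _ _ t _; apply: t. Qed.
Lemma qle_add x y z : le x y -> le (x + z) (y + z).
Proof. by case: Hq => _ _ _ _ a; apply: a. Qed.
Lemma qle_add2 a b c d : le a b -> le c d -> le (a + c) (b + d).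
Proof.
move=> h1 h2; apply: (qle_trans (qle_add c h1)).
by rewrite ![b + _]addrC; apply: qle_add.
Qed.
Lemma qadd_eq a b c d : le a b -> le c d -> a + c = b + d -> a = b /\ c = d.
Proof.
move=> h1 h2 e.
have e1 : a + c = b + c.
  apply: qle_anti; first exact: qle_add.
  by rewrite e ![b + _]addrC; apply: qle_add.
have ab : a = b by apply: (@addIr D c).
by split => //; apply: (@addrI D b); rewrite -e ab.
Qed.
Lemma qdouble0 (x : D) : x + x = 0 -> x = 0.
Proof.
move=> e; case/orP: (qle_total x 0) => h.
  apply: qle_anti => //; have := qle_add x h; by rewrite e add0r.
apply: qle_anti => //; have := qle_add x h; by rewrite e add0r.
Qed.

Lemma vle_refl a : vle le a a.
Proof. by case: a => //= x; apply: qle_refl. Qed.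
Lemma vle_trans a b c : vle le a b -> vle le b c -> vle le a c.
Proof. by case: a; case: b; case: c => //= x y z; apply: qle_trans. Qed.
Lemma vle_anti a b : vle le a b -> vle le b a -> a = b.
Proof. by case: a; case: b => //= x y h1 h2; rewrite (qle_anti h2 h1). Qed.
Lemma vle_total a b : vle le a b \/ vle le b a.
Proof.
case: a => [x|]; case: b => [y|] /=; try by [left|right].
by case/orP: (qle_total x y); auto.
Qed.
Lemma vlt_vle_trans a b c : vlt le a b -> vle le b c -> vlt le a c.
Proof.
case=> h1 h2 h3; split; first exact: vle_trans h1 h3.
by move=> e; subst; apply: h2; apply: vle_anti.
Qed.
Lemma vle_vlt_trans a b c : vle le a b -> vlt le b c -> vlt le a c.
Proof.
move=> h1 [h2 h3]; split; first exact: vle_trans h1 h2.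
by move=> e; subst; apply: h3; apply: vle_anti.
Qed.

Lemma vlt_vadd a b c d : a <> None -> c <> None -> vle le a b -> vlt le c d ->
  vlt le (vadd a c) (vadd b d).
Proof.
case: a => [a|//] _; case: c => [c|//] _.
case: b => [b|] /=; last by move=> _ _; split.
case: d => [d|] /=; last by move=> _ _; split.
move=> h1 [h2 h3]; split => //=; first exact: qle_add2.
by case=> /(qadd_eq h1 h2) [_ e]; apply: h3; rewrite e.
Qed.
Lemma vlt_vadd' a b c d : a <> None -> c <> None -> vlt le a b -> vle le c d ->
  vlt le (vadd a c) (vadd b d).
Proof.
move=> ha hc h1 h2.
have E (x y : option D) : vadd x y = vadd y x by case: x; case: y => //= x y; rewrite addrC.
by rewrite (E a) (E b); apply: vlt_vadd.
Qed.

Section Val.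
Variables (R : comNzRingType) (w : R -> option D).
Hypothesis Hw : is_valuation le w.

Lemma w0 : w 0 = None. Proof. by case: Hw. Qed.
Lemma w1 : w 1 = Some 0. Proof. by case: Hw. Qed.
Lemma wM x y : w (x * y) = vadd (w x) (w y). Proof. by case: Hw. Qed.
Lemma wU x y : vle le (w x) (w y) -> vle le (w x) (w (x + y)).
Proof. by case: Hw => _ _ _ h; case: (h x y). Qed.
Lemma wU' x y : vle le (w y) (w x) -> vle le (w y) (w (x + y)).
Proof. by case: Hw => _ _ _ h; case: (h x y). Qed.
Lemma wN1 : w (-1) = Some 0.
Proof.
have : w (-1 * -1) = Some 0 by rewrite mulrNN mulr1 w1.
rewrite wM.
by case: (w (-1)) => //= a [] /qdouble0 ->.
Qed.
Lemma wN x : w (- x) = w x.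
Proof. by rewrite -mulN1r wM wN1 /=; case: (w x) => //= y; rewrite add0r. Qed.
Lemma wS x y : vlt le (w x) (w y) -> w (x + y) = w x.
Proof.
move=> [h1 h2]; have h := wU x y h1.
case: (vle_total (w (x + y)) (w y)) => h3.
  apply: vle_anti => //; rewrite -(wN y) in h3.
  by have := wU _ _ h3; rewrite addrK.
exfalso; apply: h2; apply: vle_anti => //.
rewrite -(wN y) in h3; have := wU' _ _ h3; by rewrite addrK wN.
Qed.
Lemma wmin c x y : vlt le c (w x) -> vlt le c (w y) -> vlt le c (w (x + y)).
Proof.
move=> h1 h2; case: (vle_total (w x) (w y)) => h.
  exact: vlt_vle_trans h1 (wU _ _ h).
exact: vlt_vle_trans h2 (wU' _ _ h).
Qed.
End Val.
Lemma vadd_eq_l a b c d : a <> None -> c <> None -> vle le a b -> vle le c d ->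
  vadd a c = vadd b d -> a = b.
Proof.
move=> ha hc hab hcd e; case: (classic (a = b)) => // nab.
have [_ ] := @vlt_vadd' a b c d ha hc (conj hab nab) hcd; by rewrite e.
Qed.
End Q.
Arguments vadd_eq_l {D le} Hq {a b c d}.
Arguments vle_trans {D le} Hq {a b c}.
Arguments vle_anti {D le} Hq {a b}.
Arguments vlt_vle_trans {D le} Hq {a b c}.
Arguments vle_vlt_trans {D le} Hq {a b c}.
Arguments vlt_vadd {D le} Hq {a b c d}.
Arguments vlt_vadd' {D le} Hq {a b c d}.

Section P.
Variables (D : lmodType rat) (le : rel D) (K : fieldType) (v : K -> option D).
Hypothesis Hq : ordered_qspace le.
Variables lam mu : {poly K} -> option D.
Hypothesis Hl : in_T le v lam.
Hypothesis Hm : in_T le v mu.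
Hypothesis Hlm : T_le le lam mu.

Let Vl : is_valuation le lam. Proof. by case: Hl. Qed.
Let Vm : is_valuation le mu. Proof. by case: Hm. Qed.
Let Nl p : lam p = None -> p = 0. Proof. by case: Hl => _ _; apply. Qed.
Let Nm p : mu p = None -> p = 0. Proof. by case: Hm => _ _; apply. Qed.
Let NNl p : p != 0 -> lam p <> None. Proof. by move=> /eqP h /Nl. Qed.
Let NNm p : p != 0 -> mu p <> None. Proof. by move=> /eqP h /Nm. Qed.

Lemma exists_min : (exists g, lam g <> mu g) ->
  exists phi, lam phi <> mu phi /\
    forall a : {poly K}, (size a < size phi)%N -> lam a = mu a.
Proof.
case=> g Hg.
suff: forall n (g : {poly K}), (size g <= n)%N -> lam g <> mu g -> exists phi, lam phi <> mu phi /\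
    forall a : {poly K}, (size a < size phi)%N -> lam a = mu a by move=> /(_ (size g) g (leqnn _) Hg).
move=> {g Hg}; elim=> [|n IH] g.
  rewrite leqn0 size_poly_eq0 => /eqP ->; by rewrite (w0 Vl) (w0 Vm).
move=> Hs Hg'.
case: (classic (exists a : {poly K}, (size a < size g)%N /\ lam a <> mu a)).
  case=> a [Ha Ha']; apply: (IH a) => //; lia.
move=> H; exists g; split => // a Ha.
case: (classic (lam a = mu a)) => // H'; exfalso; apply: H; by exists a.
Qed.

Lemma unit_small (phi r : {poly K}) : lam phi <> mu phi ->
  (forall a : {poly K}, (size a < size phi)%N -> lam a = mu a) ->
  r != 0 -> (size r < size phi)%N ->
  exists s, mu (r * s) = Some 0 /\ vlt le (Some 0) (mu (r * s - 1)).
Proof.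
move=> Hphi Hmin rn0 Hr.
have phin0 : phi != 0.
  apply/eqP => e; apply: Hphi; by rewrite e (w0 Vl) (w0 Vm).
have Hlt : vlt le (lam phi) (mu phi) by split.
have cop : coprimep r phi.
  rewrite coprimep_def; apply/negPn/negP => Hg.
  set g := gcdp r phi in Hg.
  have gn0 : g != 0 by rewrite /g gcdp_eq0 negb_and rn0.
  have sg : (1 < size g)%N.
    have : (0 < size g)%N by rewrite size_poly_gt0.
    move: Hg; case: (size g) => [|[|k]] //.
  have sgr : (size g <= size r)%N by apply: dvdp_leq => //; apply: dvdp_gcdl.
  have E : phi %/ g * g = phi by apply: divpK; apply: dvdp_gcdr.
  have sc : (size (phi %/ g)%R < size phi)%N.
    rewrite size_divp //; have : (0 < size phi)%N by rewrite size_poly_gt0.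
    move: sg; case: (size g) => [|[|k]] //= _ H0; move: H0; case: (size phi) => [|m] //= _; rewrite subSS; exact: leq_subr.
  apply: Hphi; rewrite -E (wM Vl) (wM Vm) (Hmin _ sc) (Hmin g) //; exact: leq_ltn_trans sgr Hr.
case/Bezout_eq1_coprimepP: cop => -[u1 u2] /= Hb.
set s := u1 %% phi.
set t := - (u2 + r * (u1 %/ phi)).
have E : r * s - 1 = phi * t.
  have Hs : s = u1 - u1 %/ phi * phi.
    by rewrite /s {2}(divp_eq u1 phi) addrC addKr.
  rewrite -Hb Hs /t; ring.
have ss : (size s < size phi)%N by rewrite ltn_modp.
exists s.
have Exm : lam (r * s) = mu (r * s) by rewrite (wM Vl) (wM Vm) !Hmin.
have [t0|tn0] := eqVneq t 0.
  move: E; rewrite t0 mulr0 => /eqP; rewrite subr_eq0 => /eqP ->.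
  rewrite (w1 Vm) subrr (w0 Vm); by split.
have Hy : vlt le (lam (phi * t)) (mu (phi * t)).
  rewrite (wM Vl) (wM Vm); apply: vlt_vadd' => //; first exact: NNl.
  exact: NNl.
have E1 : 1 = r * s + - (phi * t) by rewrite -E opprB addrC subrK.
have nc : ~ vle le (mu (phi * t)) (mu (r * s)).
  move=> h.
  have h2 : vlt le (lam (- (phi * t))) (lam (r * s)).
    rewrite (wN Hq Vl) Exm; exact: (vlt_vle_trans Hq Hy h).
  have h3 := wS Hq Vl _ _ h2; rewrite addrC -E1 (w1 Vl) (wN Hq Vl) in h3.
  rewrite -(wN Hq Vm) in h.
  have h4 := wU' Vm _ _ h; rewrite -E1 (w1 Vm) (wN Hq Vm) in h4.
  rewrite -h3 in Hy; case: Hy => Hy1 Hy2; apply: Hy2; exact: (vle_anti Hq Hy1 h4).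
have h' : vlt le (mu (r * s)) (mu (phi * t)).
  case: (vle_total Hq (mu (phi * t)) (mu (r * s))) => h; first by [].
  split => // e; apply: nc; rewrite e; exact: vle_refl.
have h5 : mu (r * s + - (phi * t)) = mu (r * s).
  by apply: (wS Hq Vm); rewrite (wN Hq Vm).
rewrite -E1 (w1 Vm) in h5.
split; first by rewrite -h5.
by rewrite E h5.
Qed.

Lemma fwd (f : {poly K}) : (exists g, lam g <> mu g) -> f != 0 -> lam f = mu f ->
  in_unit le mu f.
Proof.
move=> /exists_min [phi [Hphi Hmin]] fn0 Hf.
have phin0 : phi != 0.
  apply/eqP => e; apply: Hphi; by rewrite e (w0 Vl) (w0 Vm).
have Hlt : vlt le (lam phi) (mu phi) by split.
set q := f %/ phi; set r := f %% phi.
have Ef : f = q * phi + r by apply: divp_eq.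
have sr : (size r < size phi)%N by rewrite ltn_modp.
have [q0|qn0] := eqVneq q 0.
  have fr : f = r by rewrite {1}Ef q0 mul0r add0r.
  have [s [s1 s2]] := @unit_small phi f Hphi Hmin fn0 (ltac:(by rewrite fr)).
  by exists s; right; rewrite s1.
have Hqp : vlt le (lam (q * phi)) (mu (q * phi)).
  rewrite (wM Vl) (wM Vm); apply: (vlt_vadd Hq); [exact: NNl|exact: NNl|exact: Hlm|exact: Hlt].
have Hle1 : vle le (lam f) (lam (q * phi)).
  case: (classic (vle le (lam f) (lam (q * phi)))) => // h.
  have h' : vlt le (lam (q * phi)) (lam f).
    case: (vle_total Hq (lam f) (lam (q * phi))) => // h0; split => // e.
    by apply: h; rewrite e; apply: vle_refl.
  have Er : r = - (q * phi) + f by rewrite Ef addKr.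
  have Elr : lam r = lam (q * phi).
    have := wS Hq Vl (- (q * phi)) f; rewrite (wN Hq Vl) -Er; by apply.
  have Emr : mu r = lam r by rewrite (Hmin r sr).
  have Eq : q * phi = - r + f by rewrite Ef addrC addrK.
  have Emq : mu (q * phi) = mu r.
    rewrite Eq (wS Hq Vm) ?(wN Hq Vm) //; rewrite Emr Elr -Hf; exact: h'.
  case: Hqp => _ []; by rewrite Emq Emr Elr.
have Hmf : vlt le (mu f) (mu (q * phi)).
  rewrite -Hf; exact: (vle_vlt_trans Hq Hle1 Hqp).
have Er' : r = f + - (q * phi) by rewrite Ef addrC addKr.
have Hmr : mu r = mu f.
  rewrite Er' (wS Hq Vm) // (wN Hq Vm); exact: Hmf.
have rn0 : r != 0.
  apply/eqP => e; apply: (NNm fn0); by rewrite -Hmr e (w0 Vm).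
have [s [s1 s2]] := @unit_small phi r Hphi Hmin rn0 sr.
exists s; right.
have Hfs : mu (f * s) = Some 0 by rewrite (wM Vm) -Hmr -(wM Vm).
have sn0 : mu s <> None.
  move=> e; move: s1; rewrite (wM Vm) e; by case: (mu r).
have E2 : f * s - 1 = (r * s - 1) + (q * phi) * s by rewrite {1}Ef; ring.
rewrite Hfs E2; apply: (wmin Hq Vm) => //.
rewrite -Hfs (wM Vm f s) (wM Vm (q * phi) s); apply: (vlt_vadd' Hq) => //; first exact: NNm.
exact: (vle_refl Hq).
Qed.

Lemma bwd (f : {poly K}) : in_unit le lam f -> lam f = mu f.
Proof.
case=> h H.
have E : lam (f * h) = Some 0 /\ mu (f * h) = Some 0.
  case: H => [e|H]; first by rewrite e (w1 Vl) (w1 Vm).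
  have E1 : 1 = f * h + - (f * h - 1) by rewrite opprB addrC subrK.
  have l0 : lam (f * h) = Some 0.
    rewrite -(w1 Vl) E1 (wS Hq Vl) // (wN Hq Vl); exact: H.
  split => //.
  have E2 : f * h = 1 + (f * h - 1) by rewrite addrC subrK.
  rewrite E2 (wS Hq Vm) ?(w1 Vm) //; rewrite -l0.
  exact: (vlt_vle_trans Hq H (Hlm _)).
case: E; rewrite (wM Vl) (wM Vm) => e1 e2.
have nf : lam f <> None by move=> e; rewrite e in e1.
have nh : lam h <> None by move=> e; rewrite e in e1; case: (lam f) e1.
apply: (vadd_eq_l Hq nf nh (Hlm f) (Hlm h)); by rewrite e1 e2.
Qed.
End P.

Unset Implicit Arguments.


Theorem lemma1p4 (D : lmodType rat) (le : rel D) (K : fieldType)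
    (v : K -> option D) (d : Order.disp_t) (A : orderType d)
    (rho : A -> {poly K} -> option D) :
  valued_field_with_GammaQ le v ->
  (forall i, in_T le v (rho i)) ->
  (forall i, inner_node le (rho i)) ->
  (forall i j : A, (i < j)%O -> T_lt le (rho i) (rho j)) ->
  (forall i : A, exists j : A, (i < j)%O) ->
  forall f : {poly K}, f != 0 ->
  (C_stable rho f <-> exists i : A, in_unit le (rho i) f).
Proof.
move=> Hv HT _ Hlt Hnm f fn0; have [Hq _ _ _] := Hv; split.
  case=> i Hi; have [j ij] := Hnm i; have [Tle Tne] := Hlt i j ij.
  exists j; exact: (fwd Hq (HT i) (HT j) Tle f Tne fn0 (Hi j ij)).
case=> i Hu; exists i => j ij; have [Tle _] := Hlt i j ij.
exact: (bwd Hq (HT i) (HT j) Tle Hu).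
Qed.
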